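(* Let $\alpha<\beta\le\alpha+2\pi$, $\gamma:=\pi/(\beta-\alpha)$, $a\in(0,1)$, $r>0$, and $z\in\angle(\alpha,\beta)$. If $a|z|\ge r$, then $$\omega\bigl(z,\overline D(r);\angle(\alpha,\beta)\bigr)\le\frac{2r^{\gamma}}{\pi(1-a^{\gamma})^2}\Bigl(-\operatorname{Im}\frac1{(ze^{-i\alpha})^{\gamma}}\Bigr),$$ and if $ar\ge|z|$, then $$\omega\bigl(z,\mathbb{C}\setminus D(r);\angle(\alpha,\beta)\bigr)\le\frac{2r^{-\gamma}}{\pi(1-a^{\gamma})^2}\operatorname{Im}\,(ze^{-i\alpha})^{\gamma}.$$
   Context: $\angle(\alpha,\beta)=\{z\ne0:\ \text{some value of }\arg z\in(\alpha,\beta)\}$ is an open angle; $(ze^{-i\alpha})^{\gamma}$ is the branch on the angle that maps it conformally onto the upper half-plane and is positive on $(0,\infty)$. For $z$ in the angle with image $w$ and Borel $B$, $\omega(z,B;\angle(\alpha,\beta)):=\frac1\pi\int_{B'}\frac{\operatorname{Im}w}{(t-\operatorname{Re}w)^2+(\operatorname{Im}w)^2}dt$, where $B'\subset\mathbb{R}$ is the image of $B\cap\partial\angle(\alpha,\beta)$ under the boundary extension of this map (the harmonic measure of $B\cap\partial\angle(\alpha,\beta)$ for the angle). $D(r)$, $\overline D(r)$: open/closed discs of radius $r$ about $0$. *)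

(* Defs.v *)
From mathcomp Require Import all_boot all_order all_algebra.
From mathcomp Require Import all_classical all_reals all_analysis.
From mathcomp Require Export complex.
Set Implicit Arguments. Unset Strict Implicit. Unset Printing Implicit Defensive.
Import Order.TTheory GRing.Theory Num.Theory.
Local Open Scope classical_set_scope.
Local Open Scope ring_scope.
Local Open Scope complex_scope.

Section AngleDefs.
Context (R : realType).

Definition expi (t : R) : R[i] := (cos t +i* sin t)%C.

Definition angle (al be : R) : set R[i] :=
  [set z | exists rho th : R, 0 < rho /\ al < th < be /\ z = rho%:C * expi th].

Definition angle_gamma (al be : R) : R := pi / (be - al).

(** polar coordinates (|z|, arg z) of z, with the value of arg z chosen in (al,be)
    (unique when be - al <= 2 pi). *)
Definition angle_polar (al be : R) (z : R[i]) : R * R :=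
  xget (0, 0) [set p : R * R | 0 < p.1 /\ al < p.2 < be /\ z = p.1%:C * expi p.2].

(** (z e^{-i al})^gamma : the branch on ∠(al,be), positive on (0,oo),
    mapping the angle conformally onto the upper half-plane:
    for z = rho e^{i th}, al < th < be, it is rho^gamma e^{i gamma (th - al)}. *)
Definition angle_map (al be : R) (z : R[i]) : R[i] :=
  let p := angle_polar al be z in
  let g := angle_gamma al be in
  (p.1 `^ g)%:C * expi (g * (p.2 - al)).

(** Inverse of the boundary extension of angle_map: the real axis is mapped
    back onto the boundary of the angle; t >= 0 goes to the ray arg = al
    (t = rho^gamma), t < 0 goes to the ray arg = be (t = - rho^gamma).
    (For be = al + 2 pi both rays are the same set, seen from its two sides.) *)
Definition angle_bdry (al be : R) (t : R) : R[i] :=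
  let g := angle_gamma al be in
  if 0 <= t then (t `^ g^-1)%:C * expi al else ((- t) `^ g^-1)%:C * expi be.

(** B' = image of B ∩ ∂∠(al,be) under the boundary extension. *)
Definition angle_bdry_image (al be : R) (B : set R[i]) : set R :=
  angle_bdry al be @^-1` B.

(** Harmonic measure ω(z, B; ∠(al,be)) via the Poisson integral of the upper half-plane. *)
Definition harm_measure (al be : R) (z : R[i]) (B : set R[i]) : \bar R :=
  let w := angle_map al be z in
  ((pi^-1)%:E *
    \int[@lebesgue_measure R]_(t in angle_bdry_image al be B)
       ((complex.Im w / ((t - complex.Re w) ^+ 2 + (complex.Im w) ^+ 2))%:E))%E.

Definition cdisc (r : R) : set R[i] := [set u | Normc.normc u <= r].
Definition odisc (r : R) : set R[i] := [set u | Normc.normc u < r].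

End AngleDefs.

(* Main.v *)
Require Import Defs.
From mathcomp Require Import all_boot all_order all_algebra.
From mathcomp Require Import all_classical all_reals all_analysis.
From mathcomp Require Import complex.
From mathcomp Require Import ring lra.
From mathcomp Require Import measurable_realfun.
Import Order.TTheory GRing.Theory Num.Theory.
Import numFieldNormedType.Exports.
Local Open Scope classical_set_scope.
Local Open Scope ring_scope.
Local Open Scope complex_scope.
Section S.
Context (R : realType).
Lemma poisson_cont (u v : R) : 0 < v -> continuous (fun t : R => v / ((t - u) ^+ 2 + v ^+ 2)).
Proof.
move=> v0 t.
apply: cvgM; first exact: cvg_cst.
apply: cvgV; first by rewrite gt_eqF// ltr_pwDr ?exprn_gt0// sqr_ge0.
apply: cvgD; last exact: cvg_cst.
apply: cvgM; apply: cvgB; [exact: cvg_id | exact: cvg_cst|exact: cvg_id | exact: cvg_cst].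
Qed.
Lemma normu_le (u v W : R) : 0 <= W -> u ^+ 2 + v ^+ 2 = W ^+ 2 -> `|u| <= W.
Proof.
move=> W0 E; rewrite -(ler_sqr (normr_ge0 u) W0) real_normK ?num_real//.
by rewrite -E lerDl sqr_ge0.
Qed.

Lemma P_bound1 (u v W k t : R) : 0 <= v -> 0 < W -> u ^+ 2 + v ^+ 2 = W ^+ 2 ->
  0 <= k < 1 -> `|t| <= k * W ->
  v / ((t - u) ^+ 2 + v ^+ 2) <= v / (W ^+ 2 * (1 - k) ^+ 2).
Proof.
move=> v0 W0 E /andP[k0 k1] tk.
have uW := @normu_le u v W (ltW W0) E.
have tu : t * u <= `|t| * W.
  by rewrite (le_trans (ler_norm _))// normrM ler_wpM2l.
have T2 : `|t| ^+ 2 = t ^+ 2 by rewrite real_normK ?num_real.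
have T0 : 0 <= `|t| by [].
have Epos : 0 < W ^+ 2 * (1 - k) ^+ 2.
  by rewrite mulr_gt0// exprn_gt0// subr_gt0.
have DE : W ^+ 2 * (1 - k) ^+ 2 <= (t - u) ^+ 2 + v ^+ 2.
  have h1 : 0 <= W * (1 - k) by rewrite mulr_ge0// ?subr_ge0 ?ltW.
  have h2 : W * (1 - k) <= W - `|t| by lra.
  have : (t - u) ^+ 2 + v ^+ 2 = t ^+ 2 - 2 * (t * u) + W ^+ 2.
    by rewrite -E; ring.
  move=> ->; nra.
apply: ler_wpM2l => //.
by rewrite lef_pV2 ?posrE// (lt_le_trans Epos).
Qed.

Lemma P_bound2 (u v W k t s : R) : 0 <= v -> 0 <= W -> u ^+ 2 + v ^+ 2 = W ^+ 2 ->
  0 <= k < 1 -> W <= k * s -> s <= `|t| -> 0 < s ->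
  v / ((t - u) ^+ 2 + v ^+ 2) <= v / ((1 - k) ^+ 2 * t ^+ 2).
Proof.
move=> v0 W0 E /andP[k0 k1] Wk st s0.
have uW := @normu_le u v W W0 E.
have tu : t * u <= `|t| * W.
  by rewrite (le_trans (ler_norm _))// normrM ler_wpM2l.
have T2 : `|t| ^+ 2 = t ^+ 2 by rewrite real_normK ?num_real.
have T0 : 0 < `|t| by apply: lt_le_trans st.
have Epos : 0 < (1 - k) ^+ 2 * t ^+ 2.
  by rewrite -T2 mulr_gt0// exprn_gt0// subr_gt0.
have DE : (1 - k) ^+ 2 * t ^+ 2 <= (t - u) ^+ 2 + v ^+ 2.
  have h1 : 0 <= (1 - k) * `|t| by rewrite mulr_ge0// ?subr_ge0 ?ltW.
  have h3 : k * s <= k * `|t| by rewrite ler_wpM2l.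
  have h2 : (1 - k) * `|t| <= `|t| - W by lra.
  have : (t - u) ^+ 2 + v ^+ 2 = t ^+ 2 - 2 * (t * u) + W ^+ 2.
    by rewrite -E; ring.
  move=> ->; rewrite -T2; nra.
apply: ler_wpM2l => //.
by rewrite lef_pV2 ?posrE// (lt_le_trans Epos).
Qed.
Local Notation mu := (@lebesgue_measure R).

Lemma P_meas (u v : R) (D : set R) : 0 < v ->
  measurable_fun D (fun t : R => (v / ((t - u) ^+ 2 + v ^+ 2))%:E).
Proof.
move=> v0.
have h : measurable_fun D (fun t : R => v / ((t - u) ^+ 2 + v ^+ 2)).
  apply: measurable_funTS.
  by apply: continuous_measurable_fun; exact: poisson_cont.
exact: (proj2 (measurable_EFinP D _) h).
Qed.

Lemma P_ge0 (u v t : R) : 0 <= v -> 0 <= v / ((t - u) ^+ 2 + v ^+ 2).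
Proof. by move=> v0; rewrite divr_ge0// addr_ge0// sqr_ge0. Qed.

Lemma I1 (u v W k s : R) : 0 < v -> 0 < W -> u ^+ 2 + v ^+ 2 = W ^+ 2 ->
  0 <= k < 1 -> 0 < s -> s <= k * W ->
  (\int[mu]_(t in `[(- s)%R, s]) (v / ((t - u) ^+ 2 + v ^+ 2))%R%:E <=
    (v / (W ^+ 2 * (1 - k) ^+ 2) * (2 * s))%R%:E)%E.
Proof.
move=> v0 W0 E k01 s0 sk.
apply: (@le_trans _ _ (\int[mu]_(t in `[(- s)%R, s]) (cst (v / (W ^+ 2 * (1 - k) ^+ 2))%R%:E) t)%E).
  apply: ge0_le_integral => //.
  - by move=> t _; rewrite lee_fin P_ge0// ltW.
  - exact: P_meas.
  - move=> t; rewrite /= in_itv/= => /andP[h1 h2]; rewrite lee_fin.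
    apply: (@P_bound1 u v W k t (ltW v0) W0 E k01).
    by rewrite (le_trans _ sk)// ler_norml h1.
rewrite integral_cst//.
set m := (X in (_ * X <= _)%E).
have -> : m = (2 * s)%:E.
  rewrite /m; have := lebesgue_measure_itv `[(- s)%R, s]; rewrite /= => ->.
  rewrite lte_fin ifT; last by rewrite -subr_gt0 opprK addr_gt0.
  by rewrite -EFinD opprK -mulr2n mulr_natl.
by rewrite -EFinM.
Qed.
Lemma derF (c x : R) : x != 0 -> is_derive x 1 (fun y : R => - c * y^-1) (c / x ^+ 2).
Proof.
move=> x0.
have h1 : is_derive x (1:R) (fun y : R => (id y)^-1) (- (id x) ^- 2 *: (1:R)).
  by apply: is_deriveV.
have h2 := @is_deriveZ _ _ _ (fun y : R => (id y)^-1) (- c) x 1 _ h1.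
have h3 : is_derive x (1:R) (fun y : R => - c * y^-1) ((- c) *: (- (id x) ^- 2 *: (1:R))) := h2.
have -> : c / x ^+ 2 = (- c) *: (- (id x) ^- 2 *: (1:R)).
  by rewrite /= scaler1; rewrite -[(- c) *: _]/((- c) * _) mulrN mulNr opprK.
exact: h3.
Qed.

Lemma FTCinv (c s : R) : 0 <= c -> 0 < s ->
  (\int[mu]_(x in `[s, +oo[) (c / Num.max (x ^+ 2) (s ^+ 2))%R%:E = (c / s)%R%:E)%E.
Proof.
move=> c0 s0.
rewrite (@ge0_continuous_FTC2y _ _ (fun y : R => - c * y^-1) _ 0).
- by rewrite sub0e /= mulNr opprK.
- by move=> x _; rewrite divr_ge0// le_max sqr_ge0.
- apply: continuous_subspaceT => x.
  apply: cvgM; first exact: cvg_cst.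
  apply: cvgV; first by rewrite gt_eqF// lt_max (exprn_gt0 _ s0) orbT.

  have -> : (fun y : R => Num.max (y ^+ 2) (s ^+ 2)) =
      (fun y : R => (y ^+ 2 + s ^+ 2 + `|y ^+ 2 - s ^+ 2|) / 2).
    by apply: funext => y; rewrite maxr_absE.
  rewrite maxr_absE.
  apply: cvgM; last exact: cvg_cst.
  apply: cvgD; first (apply: cvgD; last exact: cvg_cst).
    by apply: cvgM; exact: cvg_id.
  apply: cvg_norm; apply: cvgB; last exact: cvg_cst.
  by apply: cvgM; exact: cvg_id.
- rewrite -(mulr0 (- c)); apply: cvgM; first exact: cvg_cst.
  apply/gtr0_cvgV0; first by near=> y.
  exact: cvg_id.
- by move=> x sx; apply: ex_derive; apply: derF; rewrite gt_eqF// (lt_trans s0).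
- apply: cvg_at_right_filter; apply: cvgM; first exact: cvg_cst.
  by apply: cvgV; [rewrite gt_eqF|exact: cvg_id].
- move=> x; rewrite in_itv/= andbT => sx.
  have x0 : x != 0 by rewrite gt_eqF// (lt_trans s0).
  have hd := derF c x x0.
  rewrite derive1E derive_val.
  congr (_ / _); apply/esym/max_idPl.
  by rewrite ler_sqr ?nnegrE ?ltW// (lt_trans s0).
Unshelve. all: by end_near.
Qed.
Lemma maxc_cont (c s : R) : 0 < s -> continuous (fun x : R => c / Num.max (x ^+ 2) (s ^+ 2)).
Proof.
move=> s0 x.
apply: cvgM; first exact: cvg_cst.
apply: cvgV; first by rewrite gt_eqF// lt_max (exprn_gt0 _ s0) orbT.
have -> : (fun y : R => Num.max (y ^+ 2) (s ^+ 2)) =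
    (fun y : R => (y ^+ 2 + s ^+ 2 + `|y ^+ 2 - s ^+ 2|) / 2).
  by apply: funext => y; rewrite maxr_absE.
rewrite maxr_absE.
apply: cvgM; last exact: cvg_cst.
apply: cvgD; first (apply: cvgD; last exact: cvg_cst).
  by apply: cvgM; exact: cvg_id.
apply: cvg_norm; apply: cvgB; last exact: cvg_cst.
by apply: cvgM; exact: cvg_id.
Qed.

Lemma maxc_meas (c s : R) (D : set R) : 0 < s ->
  measurable_fun D (fun x : R => (c / Num.max (x ^+ 2) (s ^+ 2))%:E).
Proof.
move=> s0.
have h : measurable_fun D (fun x : R => c / Num.max (x ^+ 2) (s ^+ 2)).
  apply: measurable_funTS.
  by apply: continuous_measurable_fun; exact: maxc_cont.
exact: (proj2 (measurable_EFinP D _) h).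
Qed.

Lemma FTCinvN (c s : R) : 0 <= c -> 0 < s ->
  (\int[mu]_(x in `]-oo, (- s)%R]) (c / Num.max (x ^+ 2) (s ^+ 2))%R%:E = (c / s)%R%:E)%E.
Proof.
move=> c0 s0.
rewrite (@ge0_integration_by_substitutionNy _ (fun x : R => c / Num.max (x ^+ 2) (s ^+ 2)) s).
- rewrite -(FTCinv c s c0 s0); apply: eq_integral => x _ /=.
  by rewrite sqrrN.
- exact/continuous_subspaceT/maxc_cont.
- by move=> x _; rewrite divr_ge0// le_max sqr_ge0.
Qed.

Lemma I2 (u v W k s : R) : 0 < v -> 0 <= W -> u ^+ 2 + v ^+ 2 = W ^+ 2 ->
  0 <= k < 1 -> 0 < s -> W <= k * s ->
  (\int[mu]_(t in `]-oo, (- s)%R] `|` `[s, +oo[) (v / ((t - u) ^+ 2 + v ^+ 2))%R%:E <=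
    (v / (1 - k) ^+ 2 / s)%R%:E + (v / (1 - k) ^+ 2 / s)%R%:E)%E.
Proof.
move=> v0 W0 E k01 s0 Wk.
have k1 : 0 < 1 - k by case/andP: k01 => _ h; rewrite subr_gt0.
set c := v / (1 - k) ^+ 2.
have c0 : 0 <= c by apply: divr_ge0; [exact: ltW | exact: sqr_ge0].
have key : forall t, s <= `|t| ->
    v / ((t - u) ^+ 2 + v ^+ 2) <= c / Num.max (t ^+ 2) (s ^+ 2).
  move=> t st.
  have -> : Num.max (t ^+ 2) (s ^+ 2) = t ^+ 2.
    have T2 : `|t| ^+ 2 = t ^+ 2 by rewrite real_normK ?num_real.
    apply/max_idPl; rewrite -T2 !expr2.
    by apply: ler_pM; rewrite ?(ltW s0).
  rewrite /c -mulrA -invfM.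
  exact: (@P_bound2 u v W k t s (ltW v0) W0 E k01 Wk st s0).
rewrite ge0_integral_setU//; last 3 first.
- exact: P_meas.
- by move=> t _; rewrite lee_fin P_ge0// ltW.
- rewrite disj_set2E; apply/eqP; apply/seteqP; split => // t [].
  rewrite /= !in_itv/= andbT => h1 h2.
  have hs : s <= - s by apply: le_trans h2 h1.
  clear -hs s0; lra.
apply: leeD.
- rewrite -(FTCinvN c s c0 s0); apply: ge0_le_integral => //.
  + by move=> t _; rewrite lee_fin P_ge0// ltW.
  + exact: P_meas.
  + exact: maxc_meas.
  + move=> t; rewrite /= in_itv/= => ts; rewrite lee_fin; apply: key.
    have t0 : t <= 0 by apply: (le_trans ts); rewrite oppr_le0 ltW.
    by rewrite (ler0_norm t0) lerNr.
- rewrite -(FTCinv c s c0 s0); apply: ge0_le_integral => //.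
  + by move=> t _; rewrite lee_fin P_ge0// ltW.
  + exact: P_meas.
  + exact: maxc_meas.
  + move=> t; rewrite /= in_itv/= andbT => ts; rewrite lee_fin; apply: key.
    by rewrite ger0_norm// (le_trans _ ts)// ltW.
Qed.
End S.

Section T.
Context (R : realType).

Lemma normc_expi (x th : R) : 0 <= x -> Normc.normc (x%:C * expi th) = x.
Proof.
move=> x0; rewrite Normc.normcM /expi /=.
rewrite expr0n /= addr0 sqrtr_sqr ger0_norm// cos2Dsin2 sqrtr1 mulr1 //.
Qed.

Lemma powR_mono (x y p : R) : 0 <= x -> 0 <= y -> 0 < p ->
  (x `^ p <= y `^ p) = (x <= y).
Proof.
move=> x0 y0 p0; apply/idP/idP; last by apply: ge0_ler_powR; rewrite ?nnegrE// ltW.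
move=> h.
have e : forall z : R, 0 <= z -> (z `^ p) `^ p^-1 = z.
  by move=> z z0; rewrite -powRrM mulfV ?gt_eqF// powRr1.
rewrite -(e x x0) -(e y y0).
have pi0 : 0 <= p^-1 by rewrite invr_ge0 ltW.
have h1 : x `^ p \in Num.nneg by rewrite nnegrE powR_ge0.
have h2 : y `^ p \in Num.nneg by rewrite nnegrE powR_ge0.
exact: (ge0_ler_powR pi0 h1 h2 h).
Qed.

Lemma normc_bdry (al be t : R) :
  Normc.normc (angle_bdry al be t) = `|t| `^ (angle_gamma al be)^-1.
Proof.
rewrite /angle_bdry /=; case: ifPn => t0.
  by rewrite normc_expi ?powR_ge0// ger0_norm.
by rewrite normc_expi ?powR_ge0// ltr0_norm// ltNge.
Qed.
Lemma powRVK (x g : R) : 0 <= x -> 0 < g -> (x `^ g^-1) `^ g = x.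
Proof. by move=> x0 g0; rewrite -powRrM mulVf ?gt_eqF// powRr1. Qed.

Lemma bdry_cdisc (al be r : R) : 0 < angle_gamma al be -> 0 < r ->
  angle_bdry_image al be (cdisc r) =
  `[(- (r `^ angle_gamma al be))%R, r `^ angle_gamma al be]%classic.
Proof.
move=> g0 r0; apply/seteqP; split => t; rewrite /angle_bdry_image /preimage /cdisc /= normc_bdry in_itv /=;
  rewrite -ler_norml -(@powR_mono (`|t| `^ (angle_gamma al be)^-1) r (angle_gamma al be)) ?powR_ge0 ?(ltW r0)// powRVK//.
Qed.

Lemma bdry_codisc (al be r : R) : 0 < angle_gamma al be -> 0 < r ->
  angle_bdry_image al be (~` odisc r) =
  `]-oo, (- (r `^ angle_gamma al be))%R] `|` `[r `^ angle_gamma al be, +oo[.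
Proof.
move=> g0 r0; apply/seteqP; split => t; rewrite /angle_bdry_image /preimage /setC /odisc /= normc_bdry !in_itv /= andbT.
- move/negP; rewrite -leNgt -(@powR_mono r (`|t| `^ (angle_gamma al be)^-1) (angle_gamma al be)) ?powR_ge0 ?(ltW r0)// powRVK//.
  by rewrite ler_normr => /orP[h|h]; [right|left; rewrite lerNr].
- move=> h; apply/negP; rewrite -leNgt -(@powR_mono r (`|t| `^ (angle_gamma al be)^-1) (angle_gamma al be)) ?powR_ge0 ?(ltW r0)// powRVK//.
  by rewrite ler_normr; case: h => h; apply/orP; [right; rewrite -lerNr|left].
Qed.
Lemma angle_map_eq (al be : R) (z : R[i]) : al < be -> angle al be z ->
  exists rho th : R, [/\ 0 < rho, al < th < be, Normc.normc z = rho &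
    angle_map al be z = (rho `^ angle_gamma al be * cos (angle_gamma al be * (th - al))) +i*
                        (rho `^ angle_gamma al be * sin (angle_gamma al be * (th - al)))].
Proof.
move=> ab hz.
set P := [set p : R * R | 0 < p.1 /\ al < p.2 < be /\ z = p.1%:C * expi p.2].
have : P (angle_polar al be z).
  apply: xgetPex; case: hz => rho [th [h1 [h2 h3]]]; by exists (rho, th).
rewrite /angle_map /=.
case: (angle_polar al be z) => rho th /= [h1 [h2 h3]].
exists rho, th; split => //.
  by rewrite h3 normc_expi// ltW.
rewrite /expi /=.
by simpc.
Qed.
End T.

Theorem proposition13 (R : realType) (al be a r : R) (z : R[i]) :
  al < be -> be <= al + 2 * pi ->
  0 < a < 1 -> 0 < r -> angle al be z ->
  (r <= a * Normc.normc z ->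
     (harm_measure al be z (cdisc r) <=
       ((2 * r `^ (pi / (be - al))) / (pi * (1 - a `^ (pi / (be - al))) ^+ 2)
          * (- complex.Im ((angle_map al be z)^-1)))%:E)%E) /\
  (a * r >= Normc.normc z ->
     (harm_measure al be z (~` odisc r) <=
       ((2 * r `^ (- (pi / (be - al)))) / (pi * (1 - a `^ (pi / (be - al))) ^+ 2)
          * complex.Im (angle_map al be z))%:E)%E).
Proof.
move=> ab bab /andP[a0 a1] r0 hz.
have gE : pi / (be - al) = angle_gamma al be by [].
rewrite gE.
have g0 : 0 < angle_gamma al be by rewrite /angle_gamma divr_gt0 ?pi_gt0// subr_gt0.
have [rho [th [rho0 /andP[th1 th2] nz wE]]] := @angle_map_eq R al be z ab hz.
rewrite nz.
set g := angle_gamma al be in g0 wE *.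
set W := rho `^ g in wE *.
set phi := g * (th - al) in wE.
have W0 : 0 < W by rewrite /W powR_gt0.
have phi0 : 0 < phi by rewrite /phi mulr_gt0// subr_gt0.
have phipi : phi < pi.
  have -> : pi = g * (be - al) by rewrite /g /angle_gamma divfK// gt_eqF// subr_gt0.
  by rewrite /phi ltr_pM2l// ltrBlDr subrK.
have V0 : 0 < W * sin phi by rewrite mulr_gt0// sin_gt0_pi// phi0 phipi.
have E : (W * cos phi) ^+ 2 + (W * sin phi) ^+ 2 = W ^+ 2.
  by rewrite !exprMn -mulrDr cos2Dsin2 mulr1.
set k := a `^ g.
have k0 : 0 <= k by rewrite /k powR_ge0.
have k1 : k < 1.
  have h1 : a \is Num.nneg by rewrite nnegrE ltW.
  have h2 : (1 : R) \is Num.nneg by rewrite nnegrE.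
  by have := gt0_ltr_powR g0 h1 h2 a1; rewrite /= powR1 /k => ->.
have k01 : 0 <= k < 1 by rewrite k0 k1.
have k1' : 1 - k != 0 by rewrite subr_eq0 eq_sym lt_eqF.
set s := r `^ g.
have s0 : 0 < s by rewrite /s powR_gt0.
have pi0 : (0 <= (pi : R)^-1%:E)%E by rewrite lee_fin invr_ge0 pi_ge0.
split => h.
- have sk : s <= k * W.
    rewrite /s /k /W -(powRM _ (ltW a0) (ltW rho0)).
    have hn1 : r \in Num.nneg by rewrite nnegrE ltW.
    have hn2 : a * rho \in Num.nneg by rewrite nnegrE mulr_ge0// ltW.
    exact: (ge0_ler_powR (ltW g0) hn1 hn2 h).
  rewrite /harm_measure wE bdry_cdisc//= -/g -/s.
  apply: le_trans.
    apply: lee_pmul; [exact: pi0| |exact: lexx|].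
      by apply: integral_ge0 => t _; rewrite lee_fin P_ge0// ltW.
    exact: (@I1 R _ _ _ _ _ V0 W0 E k01 s0 sk).
  rewrite -EFinM lee_fin le_eqVlt; apply/orP; left; apply/eqP.
  have Pn0 : (pi : R) != 0 by rewrite gt_eqF// pi_gt0.
  have Wn0 : W != 0 by rewrite gt_eqF.
  rewrite E; move: Pn0; set P := (pi : R); clearbody P => Pn0; field.
  by rewrite Wn0 k1' Pn0.
- have Wk : W <= k * s.
    rewrite /s /k /W -(powRM _ (ltW a0) (ltW r0)).
    have hn1 : rho \in Num.nneg by rewrite nnegrE ltW.
    have hn2 : a * r \in Num.nneg by rewrite nnegrE mulr_ge0// ltW.
    exact: (ge0_ler_powR (ltW g0) hn1 hn2 h).
  rewrite /harm_measure wE bdry_codisc//= -/g -/s.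
  apply: le_trans.
    apply: lee_pmul; [exact: pi0| |exact: lexx|].
      by apply: integral_ge0 => t _; rewrite lee_fin P_ge0// ltW.
    exact: (@I2 R _ _ _ _ _ V0 (ltW W0) E k01 s0 Wk).
  rewrite -EFinD -EFinM lee_fin le_eqVlt; apply/orP; left; apply/eqP.
  have Pn0 : (pi : R) != 0 by rewrite gt_eqF// pi_gt0.
  have sn0 : s != 0 by rewrite gt_eqF.
  rewrite powRN -/s; move: Pn0; set P := (pi : R); clearbody P => Pn0; field.
  by rewrite sn0 k1' Pn0.
Qed.
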